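(* Let $G=HN$ be a finite non-Frobenius $2$-transitive affine group of degree $p^k$ ($p$ prime), with $N\cong\mathbb F_p^k$ and $H$ the stabiliser of $0$, and suppose $H\le\Gamma\mathrm L_1(p^k)$. If $\kappa(G)=2$, then $k$ is even and $|H|=2(p^k-1)$.
   Context: A derangement is an element fixing no point; $\kappa(G)$ is the number of conjugacy classes of derangements. A Frobenius group is a transitive non-regular group in which only the identity fixes more than one point. $\Gamma\mathrm L_1(p^k)=\mathbb F_{p^k}^\times\rtimes\mathrm{Gal}(\mathbb F_{p^k}/\mathbb F_p)$ acting semilinearly on $\mathbb F_{p^k}\cong\mathbb F_p^k$. *)

(* Defs.v *)
From HB Require Import structures.
From mathcomp Require Import all_boot all_order all_algebra all_fingroup.
Set Implicit Arguments. Unset Strict Implicit. Unset Printing Implicit Defensive.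
Import GRing.Theory.
Local Open Scope ring_scope.

(* The natural module V = F_p^k is modelled by a finite field F of order p^k;
   permutation groups of degree p^k are subgroups of {perm F}. *)

Definition transl (F : finFieldType) (b : F) : {perm F} := perm (@addIr F b).

Definition transl_set (F : finFieldType) : {set {perm F}} :=
  [set transl b | b : F].

(* Gamma L_1(F): semilinear maps x |-> a * s(x), a <> 0, s a field automorphism
   of F (every ring endomorphism of a finite field is an automorphism, and
   automatically fixes the prime field, i.e. lies in Gal(F/F_p)). *)
Definition in_GammaL1 (F : finFieldType) (f : {perm F}) : Prop :=
  exists a : F, a != 0 /\ exists s : {rmorphism F -> F}, forall x, f x = a * s x.

Local Open Scope group_scope.

Definition two_transitive (T : finType) (G : {set {perm T}}) : Prop :=
  forall x1 x2 y1 y2 : T, x1 != x2 -> y1 != y2 ->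
    exists2 g, g \in G & g x1 = y1 /\ g x2 = y2.

Definition frobenius_perm (T : finType) (G : {set {perm T}}) : Prop :=
  [/\ [transitive G, on [set: T] | 'P],
      ~ (forall g, g \in G -> (exists x, g x = x) -> g = 1) &
      forall g, g \in G -> forall x y : T, x != y -> g x = x -> g y = y -> g = 1].

Definition derangement (T : finType) (g : {perm T}) : bool :=
  [forall x, g x != x].

Definition kappa (T : finType) (G : {group {perm T}}) : nat :=
  #|[set C in classes G | [forall g in C, derangement g]]|.

Definition stab0 (F : finFieldType) (G : {set {perm F}}) : {set {perm F}} :=
  'C_G[0%R | 'P].

(* Main.v *)
Require Import Defs.
From HB Require Import structures.
From mathcomp Require Import all_boot all_order all_algebra all_fingroup.
From mathcomp Require Import cyclic ring.
Set Implicit Arguments. Unset Strict Implicit. Unset Printing Implicit Defensive.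

Section Helpers.
Import GRing.Theory.
Local Open Scope ring_scope.
Lemma rmorph_pow (F : finFieldType) (s : {rmorphism F -> F}) :
  exists m, forall x : F, x != 0 -> s x = x ^+ m.
Proof.
have [u Hu] : exists u : {unit F}, [set: {unit F}] = <[u]>%g.
  by apply/cyclicP; apply: field_unit_group_cyclic.
have pow: forall y : F, y != 0 -> exists i, y = FinRing.uval u ^+ i.
  move=> y y0; have Uy : y \is a GRing.unit by rewrite unitfE.
  have: (FinRing.unit F Uy) \in <[u]>%g by rewrite -Hu inE.
  by case/cycleP => i Hi; exists i; rewrite -FinRing.val_unitX -Hi.
have u0 : FinRing.uval u != 0 by rewrite -unitfE (valP u).
have su0 : s (FinRing.uval u) != 0 by rewrite fmorph_eq0.
have [m Hm] := pow _ su0.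
exists m => x /pow [i ->].
rewrite rmorphXn; transitivity ((FinRing.uval u ^+ m) ^+ i); first by congr (_ ^+ _).
by rewrite -!exprM mulnC.
Qed.

Lemma rmorph_comm (F : finFieldType) (s t : {rmorphism F -> F}) x :
  s (t x) = t (s x).
Proof.
have [->|x0] := eqVneq x 0; first by rewrite !rmorph0.
have [m Hm] := rmorph_pow s; have [n Hn] := rmorph_pow t.
rewrite Hn //. have xn : x ^+ n != 0 by rewrite expf_neq0.
have sx : s x != 0 by rewrite fmorph_eq0.
rewrite (Hm _ xn) (Hm _ x0) (Hn (x ^+ m)) ?expf_neq0 //.
by rewrite -!exprM mulnC.
Qed.

Lemma conj_inv (F : finFieldType) (s1 s2 r : {rmorphism F -> F})
  (a1 a2 a b1 b2 b : F) :
  a1 != 0 -> a != 0 ->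
  (forall x, a1 * s1 (a * r x + b) + b1 = a * r (a2 * s2 x + b2) + b) ->
  s1 =1 s2.
Proof.
move=> a10 a0 E.
have K y : a1 * s1 (a * r y + b) + b1 = a1 * s1 a * r (s1 y) + (a1 * s1 b + b1).
  by rewrite rmorphD rmorphM (rmorph_comm s1 r) mulrDr mulrA addrA.
have L y : a * r (a2 * s2 y + b2) + b = a * r a2 * r (s2 y) + (a * r b2 + b).
  by rewrite rmorphD rmorphM mulrDr mulrA addrA.
have E' y : a1 * s1 a * r (s1 y) + (a1 * s1 b + b1) = a * r a2 * r (s2 y) + (a * r b2 + b).
  by rewrite -K -L.
have E0 := E' 0; rewrite !rmorph0 !mulr0 !add0r in E0.
have E1 := E' 1; rewrite !rmorph1 !mulr1 E0 in E1; move/addIr: E1 => E1.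
move=> x; have Ex := E' x; rewrite E0 E1 in Ex; move/addIr: Ex.
move/mulfI; rewrite -E1 mulf_neq0 // ?fmorph_eq0 // => /(_ isT) /fmorph_inj.
done.
Qed.
Lemma card_fixed_sq (F : finFieldType) (s : {rmorphism F -> F}) :
  (forall x, s (s x) = x) -> (exists x, s x != x) ->
  #|F| = (#|[set x | s x == x]| ^ 2)%N.
Proof.
move=> ss [x1 sx1].
set K := [set x | s x == x].
pose f x := x - s x.
have fD x y : f (x + y) = f x + f y by rewrite /f rmorphD; ring.
set I := [set f x | x in [set: F]].
have c1 : #|F| = (#|I| * #|K|)%N.
  rewrite -cardsT -sum1_card (partition_big_imset f) /= -/I -sum_nat_const.
  apply: eq_bigr => y /imsetP [x0 _ ->].
  rewrite sum1_card -(card_imset (mem K) (addrI x0)); apply: eq_card => z.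
  rewrite [in LHS]unfold_in in_setT /=.
    apply/eqP/imsetP => [fz|[k]].
      exists (z - x0); last by rewrite addrC subrK.
      rewrite inE rmorphB -subr_eq0; apply/eqP.
      by transitivity (- ((z - s z) - (x0 - s x0))); [ring | rewrite -/(f z) fz subrr oppr0].
    rewrite inE => /eqP sk ->; rewrite fD /f sk subrr addr0 //.

have y10 : f x1 != 0 by rewrite /f subr_eq0 eq_sym.
have c2 : I = [set k * f x1 | k in K].
  apply/setP => y; apply/imsetP/imsetP => [[x _ ->]|[k]].
    exists (f x / f x1); last by rewrite divfK.
    rewrite inE fmorph_div.
    have sf z : s (f z) = - f z by rewrite /f rmorphB ss opprB.
    by rewrite !sf mulNr divrN opprK.
  rewrite inE => /eqP sk ->; exists (k * x1); first by rewrite inE.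
  by rewrite /f rmorphM sk mulrBr.
rewrite c1 c2 card_imset ?expn2 //; exact: mulIf.
Qed.
End Helpers.

Section MainSec.
Import GRing.Theory.
Local Open Scope ring_scope.
Lemma main_helper (p k : nat) (F : finFieldType) (G : {group {perm F}}) :
  prime p -> #|F| = (p ^ k)%N ->
  transl_set F \subset G ->
  (forall h, h \in stab0 G -> in_GammaL1 h) ->
  two_transitive G ->
  ~ frobenius_perm G ->
  kappa G = 2%N ->
  ~~ odd k /\ #|stab0 G| = (2 * (p ^ k - 1))%N.
Proof.
move=> pp cardF NG HGL tt nfrob kap2.
have transl_in b : transl b \in G.
  by apply: (subsetP NG); apply/imsetP; exists b.
have translE (b x : F) : transl b x = (x + b) by rewrite /transl permE.
have st0 h : (h \in stab0 G) = (h \in G) && (h 0 == 0).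
  by rewrite /stab0 inE; congr (_ && _); apply/astab1P/eqP.
have oneF : (0 : F) != 1 by rewrite eq_sym oner_eq0.
have aff g : g \in G -> exists a : F, (a != 0) /\
    exists s : {rmorphism F -> F}, forall x, g x = (a * s x + g 0).
  move=> Gg; set h := (g * transl (- g 0))%g.
  have hG : h \in G by rewrite groupM.
  have hx x : h x = (g x - g 0) by rewrite permM translE.
  have : h \in stab0 G by rewrite st0 hG hx subrr eqxx.
  case/HGL => a [a0 [s Hs]]; exists a; split => //; exists s => x.
  by rewrite -Hs hx subrK.
set H1 := [set h in G | (h 0 == 0) && (h 1 == 1)].
have H1s h : h \in H1 -> exists s : {rmorphism F -> F}, forall x, h x = s x.
  rewrite inE => /andP [Gh /andP [/eqP h0 /eqP h1]].
  have [a [a0 [s Hs]]] := aff h Gh; exists s => x.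
  have a1 : a = 1 by move: (Hs 1); rewrite h1 h0 rmorph1 mulr1 addr0.
  by rewrite Hs a1 h0 mul1r addr0.
have exb h : h \in H1 -> exists b : F, forall x, h x + b != x.
  rewrite inE => /andP [Gh /andP [/eqP h0 /eqP h1]].
  pose f x := x - h x.
  have nf : ~ injective f.
    move=> /(_ 0 1); rewrite /f h0 h1 !subrr => /(_ erefl) /eqP.
    by rewrite (negbTE oneF).
  case: (pickP [pred b | b \notin codom f]) => [b /= Hb | none].
    exists b => x; apply: contra Hb => /eqP E.
    have -> : b = f x by rewrite /f -{1}E; ring.
    exact: codom_f.
  exfalso; apply: nf.
  have : #|codom f| == #|F|.
    rewrite eqn_leq leq_image_card /=.
    apply/subset_leq_card/subsetP => b _.
    by have := none b; rewrite /= => /negbFE.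
  by move/image_injP; apply: in2T.
pose bb (h : {perm F}) : F := odflt 0 [pick b | [forall x, h x + b != x]].
have bbP h : h \in H1 -> forall x, h x + bb h != x.
  move=> Hh; rewrite /bb; case: pickP => [b /forallP //|none].
  have [b Hb] := exb h Hh; have := none b; rewrite /=.
  by have -> : [forall x, h x + b != x] by apply/forallP.
pose d h := (h * transl (bb h))%g.
have dE h x : d h x = h x + bb h by rewrite permM translE.
have H1G h : h \in H1 -> h \in G by rewrite inE => /andP [].
have dG h : h \in H1 -> d h \in G.
  by move=> Hh; apply: groupM; [apply: H1G | apply: transl_in].
pose cl h := (d h ^: G)%g.
set Kset := [set C in classes G | [forall g in C, derangement g]].
have kapE : kappa G = #|Kset| by [].
have clK h : h \in H1 -> cl h \in Kset.
  move=> Hh; rewrite inE mem_classes ?dG //=; apply/forallP => g.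
  apply/implyP => /imsetP [c Gc ->]; apply/forallP => x.
  rewrite conjgE !permM; apply/negP => /eqP E.
  have := congr1 (c^-1)%g E; rewrite permK translE => /eqP.
  by rewrite (negbTE (bbP h Hh _)).
have clinj : {in H1 &, injective cl}.
  move=> h1 h2 H1h1 H1h2 E.
  have : d h2 \in cl h1 by rewrite E class_refl.
  case/imsetP => c Gc dcE.
  have [s1 Hs1] := H1s _ H1h1; have [s2 Hs2] := H1s _ H1h2.
  have [a [a0 [r Hr]]] := aff c Gc.
  apply/permP => x; rewrite Hs1 Hs2; symmetry.
  apply: (@conj_inv _ s2 s1 r 1 1 a (bb h2) (bb h1) (c 0) (oner_neq0 _) a0) => y.
  transitivity (d h2 (c y)); first by rewrite dE Hs2 (Hr y) mul1r.
  rewrite dcE conjgE !permM permK (Hr (transl _ _)) translE Hs1 mul1r //.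
have H1le : (#|H1| <= 2)%N.
  rewrite -kap2 kapE -(card_in_imset clinj); apply/subset_leq_card/subsetP.
  by move=> C /imsetP [h Hh ->]; apply: clK.
have H11 : 1%g \in H1 by rewrite inE group1 !perm1 !eqxx.
have trG : [transitive G, on [set: F] | 'P].
  apply/imsetP; exists 0 => //; apply/setP => y; rewrite inE; apply/esym/orbitP.
  have yy : y != (if y == 0 then 1 else 0).
    by case: (eqVneq y 0) => [->|y0].
  have [g Gg [g0 _]] := tt 0 1 y _ oneF yy.
  by exists g; rewrite ?apermE.
case: (boolP [exists h in H1, h != 1%g]) => [/existsP [sg /andP [Hsg sg1]] | /existsPn noH].
  have H1E : H1 = [set 1%g; sg].
    apply/eqP; rewrite eq_sym eqEcard cards2 eq_sym sg1 (leq_trans H1le) // andbT.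
    by apply/subsetP => z /set2P [] ->.
  have sgG := H1G _ Hsg.
  have sgsg : (sg * sg)%g = 1%g.
    have : (sg * sg)%g \in H1.
      move: Hsg; rewrite !inE => /andP [_ /andP [/eqP s0 /eqP s1]].
      by rewrite groupM // !permM !s0 !s1 !eqxx.
    rewrite H1E !inE => /orP [/eqP //| /eqP E].
    exfalso; move/negP: sg1; apply.
    apply/eqP/permP => z; apply: (@perm_inj _ sg).
    by have := congr1 (fun f : {perm F} => f z) E; rewrite /= permM perm1.
  have [s Hs] := H1s _ Hsg.
  have ss x : s (s x) = x.
    by have := congr1 (fun f : {perm F} => f x) sgsg; rewrite /= permM perm1 !Hs.
  have sx : exists x, s x != x.
    case: (pickP [pred x | s x != x]) => [x Hx | none]; first by exists x.
    exfalso; move/negP: sg1; apply; apply/eqP/permP => z.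
    by rewrite perm1 Hs; apply/eqP/negbFE; exact: none z.
  have cF := card_fixed_sq ss sx.
  split.
    have := congr1 (logn p) cF; rewrite cardF pfactorK // lognX => ->.
    by rewrite oddM.
  have orb : orbit 'P (stab0 G) (1%R : F) = [set~ 0].
    apply/setP => y; rewrite !inE; apply/orbitP/idP => [[h Hh <-]|y0].
      move: Hh; rewrite st0 => /andP [_ /eqP h0].
      by rewrite -h0 (inj_eq perm_inj) eq_sym.
    rewrite eq_sym in y0; have [g Gg [g0 g1]] := tt 0 1 0 y oneF y0.
    by exists g; rewrite // st0 Gg g0 eqxx.
  have stE : ('C_(stab0 G)[(1%R : F) | 'P])%g = H1.
    apply/setP => h; rewrite in_setI st0 [in RHS]inE -andbA; congr (_ && (_ && _)).
    by apply/astab1P/eqP.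
  have := card_orbit_in_stab 'P (G := ('C_G[(0%R : F) | 'P])%G%g) (1%R : F) (subsetT _).
  rewrite -/(stab0 G) orb stE H1E cards2 eq_sym sg1 cardsC1 cardF => <-.
  by rewrite mulnC subn1.
exfalso; apply: nfrob; split => //.
- move=> reg.
  have F01 (y : F) : y = 0 \/ y = 1.
    case: (eqVneq y 0) => [->|y0]; [by left | right]; rewrite eq_sym in y0.
    have [g Gg [g0 g1]] := tt 0 1 0 y oneF y0.
    by rewrite -g1 (reg g Gg) ?perm1 //; exists 0.
  have der1 (x : {perm F}) : derangement x -> x = transl 1.
    move/forallP => Hx.
    have one1 : 1 + 1 = 0 :> F.
      case: (F01 (1 + 1)) => // /eqP; rewrite -subr_eq0 addrK => /eqP/eqP.
      by rewrite oner_eq0.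
    apply/permP => y; rewrite translE.
    have x0 : x 0 = 1 by have := Hx 0; case: (F01 (x 0)) => -> //; rewrite eqxx.
    have x1 : x 1 = 0 by have := Hx 1; case: (F01 (x 1)) => -> //; rewrite eqxx.
    by case: (F01 y) => ->; rewrite ?x0 ?x1 ?add0r ?one1.
  have : (#|Kset| <= 1)%N.
    rewrite -(cards1 (transl (1%R : F) ^: G)%g); apply/subset_leq_card/subsetP => C.
    rewrite inE => /andP [/imsetP [x Gx ->] /forallP Hd].
    have := Hd x; rewrite class_refl /= => /der1 ->.
    by rewrite inE.
  by rewrite -kapE kap2.
- move=> g Gg x y xy gx gy.
  have [c Gc [c0 c1]] := tt 0 1 x y oneF xy.
  set h := (c * g * c^-1)%g.
  have hx z : h z = (c^-1)%g (g (c z)) by rewrite !permM.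
  have Hh : h \in H1.
    rewrite inE !hx c0 c1 gx gy -{1}c0 -c1 !permK !eqxx andbT.
    by rewrite !groupM ?groupV.
  have h1 : h = 1%g by have := noH h; rewrite Hh /= negbK => /eqP.
  apply/permP => z; rewrite perm1.
  have := congr1 (fun f : {perm F} => f ((c^-1)%g z)) h1.
  by rewrite /= hx permKV perm1 => /(canRL (permKV c)); rewrite permKV.
Qed.
End MainSec.

Theorem proposition4p9 (p k : nat) (F : finFieldType) (G : {group {perm F}}) :
  prime p -> #|F| = (p ^ k)%N ->
  transl_set F \subset G ->
  (forall h, h \in stab0 G -> in_GammaL1 h) ->
  two_transitive G ->
  ~ frobenius_perm G ->
  kappa G = 2 ->
  ~~ odd k /\ #|stab0 G| = (2 * (p ^ k - 1))%N.
Proof. exact: main_helper. Qed.
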